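(* Let $p$ be prime and let $V<W\le\mathbb F_p^k$ be subspaces with $\dim W=\dim V+1$. Let $v\in V^\perp\setminus W^\perp$ be an element of minimum Hamming weight in $V^\perp\setminus W^\perp$, and let $S=\mathrm{Supp}(v)$. Then $\pi_S(V)=\langle\pi_S(v)\rangle^\perp$, where the orthogonal complement is taken in $\mathbb F_p^S$.
   Context: For $x\in\mathbb F_p^k$, $\mathrm{Supp}(x)=\{i:x_i\ne0\}$, and its Hamming weight is $|\mathrm{Supp}(x)|$. $\pi_S:\mathbb F_p^k\to\mathbb F_p^S$ is the coordinate projection. $\perp$ denotes the orthogonal complement under the standard dot product. *)

(* Defs.v *)
From HB Require Import structures.
From mathcomp Require Import all_boot all_order all_algebra.
Set Implicit Arguments. Unset Strict Implicit. Unset Printing Implicit Defensive.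
Import GRing.Theory.
Local Open Scope ring_scope.

Definition dotv (F : fieldType) (n : nat) (x y : 'rV[F]_n) : F :=
  \sum_(i < n) x 0 i * y 0 i.

Definition in_perp (F : fieldType) (k : nat) (V : {vspace 'rV[F]_k}) (x : 'rV[F]_k) : Prop :=
  forall u, u \in V -> dotv u x = 0.

Definition supp (F : fieldType) (k : nat) (x : 'rV[F]_k) : {set 'I_k} :=
  [set i | x 0 i != 0].
Definition hweight (F : fieldType) (k : nat) (x : 'rV[F]_k) : nat := #|supp x|.

(* coordinate projection pi_S : F^k -> F^S, with F^S identified with 'rV_#|S|
   via the increasing enumeration enum_val of S *)
Definition proj (F : fieldType) (k : nat) (S : {set 'I_k}) (x : 'rV[F]_k) : 'rV[F]_#|S| :=
  \row_(j < #|S|) x 0 (enum_val j).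

(* Main.v *)
Require Import Defs.
From mathcomp Require Import all_boot all_order all_algebra.
From Stdlib Require Import Classical.
Local Open Scope ring_scope.
Import GRing.Theory.
Set Implicit Arguments. Unset Strict Implicit.

Lemma dotvDl (F : fieldType) n (u w x : 'rV[F]_n) :
  dotv (u + w) x = dotv u x + dotv w x.
Proof. by rewrite /dotv -big_split; apply: eq_bigr => i _; rewrite mxE mulrDl. Qed.

Lemma dotvZl (F : fieldType) n a (u x : 'rV[F]_n) :
  dotv (a *: u) x = a * dotv u x.
Proof. by rewrite /dotv mulr_sumr; apply: eq_bigr => i _; rewrite mxE mulrA. Qed.

Lemma dotvBr (F : fieldType) n (u w x : 'rV[F]_n) :
  dotv x (u - w) = dotv x u - dotv x w.
Proof. by rewrite /dotv -sumrB; apply: eq_bigr => i _; rewrite !mxE mulrBr. Qed.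

Lemma dotvDr (F : fieldType) n (u w x : 'rV[F]_n) :
  dotv x (u + w) = dotv x u + dotv x w.
Proof. by rewrite /dotv -big_split; apply: eq_bigr => i _; rewrite mxE mulrDr. Qed.

Lemma dotvZr (F : fieldType) n a (u x : 'rV[F]_n) :
  dotv x (a *: u) = a * dotv x u.
Proof.
by rewrite /dotv mulr_sumr; apply: eq_bigr => i _; rewrite mxE mulrCA.
Qed.

Lemma dotv0l (F : fieldType) n (x : 'rV[F]_n) : dotv 0 x = 0.
Proof. by rewrite /dotv big1 // => i _; rewrite mxE mul0r. Qed.

Lemma dot_supp (F : fieldType) k (S : {set 'I_k}) (u x : 'rV[F]_k) :
  supp x \subset S -> dotv u x = dotv (proj S u) (proj S x).
Proof.
move=> sx; rewrite /dotv.
rewrite (eq_bigr (fun j => u 0 (enum_val j) * x 0 (enum_val j))); last first.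
  by move=> j _; rewrite !mxE.
rewrite -(big_enum_val (fun i => u 0 i * x 0 i)) /=.
rewrite (bigID (mem S)) /= [X in _ + X]big1 ?addr0 //.
move=> i iS; have: i \notin supp x by apply: contra iS; apply: (subsetP sx).
by rewrite inE negbK => /eqP ->; rewrite mulr0.
Qed.

Definition ext (F : fieldType) k (S : {set 'I_k}) (z : 'rV[F]_#|S|) : 'rV[F]_k :=
  \row_(i < k) \sum_(j < #|S| | enum_val j == i) z 0 j.
Arguments ext {F k S} z.

Lemma proj_ext (F : fieldType) k (S : {set 'I_k}) (z : 'rV[F]_#|S|) :
  proj S (ext z) = z.
Proof.
apply/rowP => j; rewrite !mxE (big_pred1 j) //.
by move=> j'; rewrite /= (inj_eq enum_val_inj).
Qed.

Lemma supp_ext (F : fieldType) k (S : {set 'I_k}) (z : 'rV[F]_#|S|) :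
  supp (ext z) \subset S.
Proof.
apply/subsetP => i; rewrite inE mxE; apply: contraR => iS.
rewrite big1 ?eqxx // => j /eqP ej.
by move: (enum_valP j); rewrite ej (negbTE iS).
Qed.

Lemma proj_scale (F : fieldType) k (S : {set 'I_k}) a (x : 'rV[F]_k) :
  proj S (a *: x) = a *: proj S x.
Proof. by apply/rowP => j; rewrite !mxE. Qed.

Lemma proj_add (F : fieldType) k (S : {set 'I_k}) (x y : 'rV[F]_k) :
  proj S (x + y) = proj S x + proj S y.
Proof. by apply/rowP => j; rewrite !mxE. Qed.

Lemma proj_0 (F : fieldType) k (S : {set 'I_k}) : proj S (0 : 'rV[F]_k) = 0.
Proof. by apply/rowP => j; rewrite !mxE. Qed.

Lemma supp_comb (F : fieldType) k (S : {set 'I_k}) (x y : 'rV[F]_k) c :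
  supp x \subset S -> supp y \subset S -> supp (x - c *: y) \subset S.
Proof.
move=> sx sy; apply/subsetP => j; rewrite inE !mxE; apply: contraR => jS.
have: j \notin supp x by apply: contra jS; apply: (subsetP sx).
have: j \notin supp y by apply: contra jS; apply: (subsetP sy).
by rewrite !inE !negbK => /eqP -> /eqP ->; rewrite mulr0 subr0.
Qed.

Theorem main_gen (F : fieldType) (k : nat)
  (V W : {vspace 'rV[F]_k})
  (hVW : (V <= W)%VS) (hdim : \dim W = (\dim V).+1)
  (v : 'rV[F]_k)
  (hvV : in_perp V v) (hvW : ~ in_perp W v)
  (hmin : forall w : 'rV[F]_k, in_perp V w -> ~ in_perp W w ->
            (hweight v <= hweight w)%N) :
  forall y : 'rV[F]_#|supp v|,
    (exists2 u, u \in V & proj (supp v) u = y) <->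
    dotv y (proj (supp v) v) = 0.
Proof.
set S := supp v.
have WV : forall y, in_perp W y -> in_perp V y.
  by move=> y Wy u uV; apply: Wy; apply: (subvP hVW).
have L : forall y, in_perp W y -> supp y \subset S -> y = 0.
  move=> y Wy sy; apply/rowP => i; rewrite mxE; apply/eqP; apply: contraT => yi.
  pose c := v 0 i / y 0 i; pose w := v - c *: y.
  have Vw : in_perp V w.
    by move=> u uV; rewrite dotvBr dotvZr hvV // (WV _ Wy) // mulr0 subr0.
  have nWw : ~ in_perp W w.
    move=> Ww; apply: hvW => u uW.
    have -> : v = w + c *: y by rewrite /w subrK.
    by rewrite dotvDr dotvZr Ww // Wy // mulr0 addr0.
  have iS : i \in S by apply: (subsetP sy); rewrite inE.
  have lt : (hweight w < hweight v)%N.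
    apply: proper_card; apply/properP; split.
      by apply: supp_comb => //; apply: subxx.
    exists i => //; rewrite inE !mxE negbK /c divfK // subrr //.
  by move: (hmin w Vw nWw); rewrite leqNgt lt.
have [w0 w0W w0v] : exists2 w0, w0 \in W & dotv w0 v != 0.
  apply: NNPP => H; apply: hvW => u uW; apply/eqP; apply: contraT => h.
  by exfalso; apply: H; exists u.
have w0V : w0 \notin V by apply: contra w0v => /hvV ->.
have decW : forall u, u \in W -> exists2 u1, u1 \in V & exists c, u = u1 + c *: w0.
  have sub : (V + <[w0]> <= W)%VS by rewrite subv_add hVW -memvE w0W.
  have lt : (\dim V < \dim (V + <[w0]>))%N.
    rewrite (ltn_leqif (dimv_leqif_eq (addvSl V <[w0]>))).
    apply: contra w0V => /eqP VE.
    rewrite VE.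
    by rewrite memvE addvSr.
  have eqW : (V + <[w0]>)%VS = W.
    by apply/eqP; rewrite eqEdim sub /= hdim.
  move=> u; rewrite -eqW => /memv_addP [u1 u1V [u2 /vlineP [c ->] ->]].
  by exists u1 => //; exists c.
have key : forall z : 'rV[F]_#|S|,
    (forall u, u \in V -> dotv (proj S u) z = 0) -> exists a, z = a *: proj S v.
  move=> z hz; pose z' := ext z.
  have Vz' : in_perp V z'.
    by move=> u uV; rewrite (dot_supp u (supp_ext z)) proj_ext; apply: hz.
  pose a := dotv w0 z' / dotv w0 v; pose y := z' - a *: v.
  have Wy : in_perp W y.
    move=> u /decW [u1 u1V [c ->]].
    rewrite dotvDl dotvZl /y !dotvBr !dotvZr Vz' // hvV // mulr0 subr0 add0r.
    by rewrite /a divfK // subrr mulr0.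
  have sy : supp y \subset S by apply: supp_comb; [apply: supp_ext | apply: subxx].
  have y0 := L y Wy sy.
  exists a; rewrite -proj_scale -[z]proj_ext; congr (proj S _).
  by apply/eqP; rewrite -subr_eq0; apply/eqP.
move=> y; split.
  by move=> [u uV <-]; rewrite -dot_supp ?subxx //; apply: hvV.
move=> hy.
pose b := vbasis V.
pose B := \matrix_(i < \dim V) proj S b`_i.
have yB : (y <= B)%MS.
  rewrite submxE; apply/eqP/rowP => j; rewrite !mxE.
  pose zj := \row_(l < #|S|) cokermx B l j.
  have hz : forall u, u \in V -> dotv (proj S u) zj = 0.
    move=> u uV; rewrite (coord_vbasis uV).
    pose g u := dotv (proj S u) zj.
    have gD : {morph g : x y / x + y}.
      by move=> x1 x2; rewrite /g proj_add dotvDl.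
    have g0 : g 0 = 0 by rewrite /g proj_0 dotv0l.
    rewrite -/(g _) (big_morph g gD g0) big1 // => i _.
    rewrite /g proj_scale dotvZl [X in _ * X](_ : _ = 0) ?mulr0 //.
    have := congr1 (fun M : 'M[F]_(\dim V, #|S|) => M i j) (mulmx_coker B); rewrite !mxE => <-.
    by rewrite /dotv; apply: eq_bigr => l _; rewrite !mxE.
  transitivity (dotv y zj).
    by rewrite /dotv; apply: eq_bigr => l _; rewrite !mxE.
  have [a ->] := key zj hz.
  by rewrite dotvZr hy mulr0.
have [D yD] := submxP yB.
exists (\sum_(i < \dim V) D 0 i *: b`_i).
  apply: memv_suml => i _; apply: memvZ; apply: vbasis_mem.
  by apply: mem_nth; rewrite size_tuple.
apply/rowP => j; rewrite yD !mxE summxE; apply: eq_bigr => i _.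
rewrite !mxE; reflexivity.
Qed.

Theorem corollary7p4 (p : nat) (k : nat) (hp : prime p)
  (V W : {vspace 'rV['F_p]_k})
  (hVW : (V <= W)%VS) (hdim : \dim W = (\dim V).+1)
  (v : 'rV['F_p]_k)
  (hvV : in_perp V v) (hvW : ~ in_perp W v)
  (hmin : forall w : 'rV['F_p]_k, in_perp V w -> ~ in_perp W w ->
            (hweight v <= hweight w)%N) :
  forall y : 'rV['F_p]_#|supp v|,
    (exists2 u, u \in V & proj (supp v) u = y) <->
    dotv y (proj (supp v) v) = 0.
Proof. exact: (@main_gen _ k V W hVW hdim v hvV hvW hmin). Qed.
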